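(* Let $X$ be a Fréchet space and let $\Gamma:[0,1]\to cb(X)$ be a multifunction. Then the following are equivalent: (i) $\Gamma$ is Bochner measurable; (ii) $\Gamma$ is totally measurable; (iii) $\Gamma$ is measurable by seminorm.
   Context: $X$ is a Fréchet space (metrizable, complete, locally convex) whose topology is generated by an increasing sufficient sequence of seminorms $(p_i)_{i\in\mathbb N}$, with the translation-invariant metric $d(x,y)=\sum_{i\ge1}2^{-i}\frac{p_i(x-y)}{1+p_i(x-y)}$. $cb(X)$ denotes the family of nonempty closed bounded convex subsets of $X$. For $A,B\in cb(X)$: $H(A,B)=\max(e_d(A,B),e_d(B,A))$ with $e_d(A,B)=\sup_{a\in A}\inf_{b\in B}d(a,b)$ (Hausdorff metric), and for each $i$, $H_i(A,B)=\max(e_i(A,B),e_i(B,A))$ with $e_i(A,B)=\sup_{a\in A}\inf_{b\in B}p_i(a-b)$. $[0,1]$ carries Lebesgue measure $\mu$ and the $\sigma$-algebra $\mathcal L$ of Lebesgue measurable sets. A simple multifunction is $\Gamma=\sum_{j=1}^p\chi_{A_j}C_j$ with $A_j\in\mathcal L$ pairwise disjoint and $C_j\in cb(X)$. $\Gamma$ is Bochner measurable if there are simple multifunctions $\Gamma_n:[0,1]\to cb(X)$ with $H(\Gamma_n(t),\Gamma(t))\to0$ for a.e. $t$; totally measurable if there are simple multifunctions $\Gamma_n:[0,1]\to cb(X)$ such that for every $i$, $H_i(\Gamma_n(t),\Gamma(t))\to0$ for a.e. $t$; measurable by seminorm if for every $i$ there are simple multifunctions $\Gamma_n^i:[0,1]\to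 cb(X)$ with $H_i(\Gamma^i_n(t),\Gamma(t))\to0$ for a.e. $t$. *)

(* Defs.v *)
From HB Require Import structures.
From mathcomp Require Import all_boot all_order all_algebra.
From mathcomp Require Import all_classical all_reals all_analysis.
Set Implicit Arguments. Unset Strict Implicit. Unset Printing Implicit Defensive.
Import Order.TTheory GRing.Theory Num.Theory.
Local Open Scope classical_set_scope.
Local Open Scope ring_scope.

Definition Lmu (R : realType) := @completed_lebesgue_measure R.

Definition Lmeasurable (R : realType) (A : set R) : Prop :=
  (@wlength R idfun)^*%mu.-cara.-measurable A.

(* ---------- Fréchet spaces given by an increasing sufficient sequence of
   seminorms (p i)_i (index i : nat stands for the paper's i+1) ---------- *)

Section Frechet.
Variables (R : realType) (X : lmodType R) (p : nat -> X -> R).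

Definition fdist (x y : X) : \bar R :=
  (\sum_(i <oo) ((2 ^- i.+1 * (p i (x - y) / (1 + p i (x - y))))%:E))%E.

Definition is_seminorm (q : X -> R) : Prop :=
  (forall x y, q (x + y) <= q x + q y) /\ (forall (a : R) x, q (a *: x) = `|a| * q x).

Definition frechet_seminorms : Prop :=
  [/\ (forall i, is_seminorm (p i)),
      (forall i x, p i x <= p i.+1 x),
      (forall x, (forall i, p i x = 0) -> x = 0)
    & (forall u : nat -> X,
        (forall e : R, 0 < e -> exists N, forall m n, (N <= m)%N -> (N <= n)%N ->
             (fdist (u m) (u n) < e%:E)%E) ->
        exists x, forall e : R, 0 < e -> exists N, forall n, (N <= n)%N ->
             (fdist (u n) x < e%:E)%E)].

Definition fclosed (A : set X) : Prop :=
  forall x, (forall e : R, 0 < e -> exists2 a, A a & (fdist x a < e%:E)%E) -> A x.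

Definition fbounded (A : set X) : Prop :=
  forall i, exists M : R, forall a, A a -> p i a <= M.

Definition fconvex (A : set X) : Prop :=
  forall a b (l : R), A a -> A b -> 0 <= l -> l <= 1 -> A (l *: a + (1 - l) *: b).

Definition cb (A : set X) : Prop :=
  [/\ A !=set0, fclosed A, fbounded A & fconvex A].

Definition e_d (A B : set X) : \bar R :=
  ereal_sup [set ereal_inf [set fdist a b | b in B] | a in A].
Definition Hd (A B : set X) : \bar R := Order.max (e_d A B) (e_d B A).

Definition e_i (i : nat) (A B : set X) : \bar R :=
  ereal_sup [set ereal_inf [set (p i (a - b))%:E | b in B] | a in A].
Definition Hi (i : nat) (A B : set X) : \bar R := Order.max (e_i i A B) (e_i i B A).

(* simple multifunctions [0,1] -> cb(X): sum_{j<k} chi_{A_j} C_j with A_j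
   Lebesgue measurable, pairwise disjoint, covering [0,1] *)
Definition simple_multi (G : R -> set X) : Prop :=
  exists (k : nat) (A : 'I_k -> set R) (C : 'I_k -> set X),
    [/\ forall j, Lmeasurable (A j),
        forall j, cb (C j),
        forall j j', j != j' -> A j `&` A j' = set0
      & forall t, [set` `[0%R, 1%R]] t -> exists2 j, A j t & G t = C j].

Definition ae01 (P : R -> Prop) : Prop :=
  exists N : set R, [/\ Lmeasurable N, @Lmu R N = 0%E &
    forall t, [set` `[0%R, 1%R]] t -> ~ N t -> P t].

Definition bochner_measurable (G : R -> set X) : Prop :=
  exists Gn : nat -> R -> set X, (forall n, simple_multi (Gn n)) /\
    ae01 (fun t => (fun n => Hd (Gn n t) (G t)) @ \oo --> 0%E).

Definition totally_measurable (G : R -> set X) : Prop :=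
  exists Gn : nat -> R -> set X, (forall n, simple_multi (Gn n)) /\
    forall i, ae01 (fun t => (fun n => Hi i (Gn n t) (G t)) @ \oo --> 0%E).

Definition measurable_by_seminorm (G : R -> set X) : Prop :=
  forall i, exists Gn : nat -> R -> set X, (forall n, simple_multi (Gn n)) /\
    ae01 (fun t => (fun n => Hi i (Gn n t) (G t)) @ \oo --> 0%E).

End Frechet.

(* Main.v *)
Require Import Defs.
From HB Require Import structures.
From mathcomp Require Import all_boot all_order all_algebra.
From mathcomp Require Import all_classical all_reals all_analysis.
From mathcomp Require Import ring lra.
Set Implicit Arguments. Unset Strict Implicit. Unset Printing Implicit Defensive.
Import Order.TTheory GRing.Theory Num.Theory.
Local Open Scope classical_set_scope.
Local Open Scope ring_scope.
Section Main.
Variables (R : realType) (X : lmodType R) (p : nat -> X -> R).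
Hypothesis hp : frechet_seminorms p.

Let ptri i x y : p i (x + y) <= p i x + p i y.
Proof. by case: hp => /(_ i) [+ _] _ _ _; apply. Qed.
Let pscale i (a : R) x : p i (a *: x) = `|a| * p i x.
Proof. by case: hp => /(_ i) [_ +] _ _ _; apply. Qed.
Lemma p0 i : p i 0 = 0.
Proof. by rewrite -(scale0r (0 : X)) pscale normr0 mul0r. Qed.
Lemma pN i x : p i (- x) = p i x.
Proof. by rewrite -scaleN1r pscale normrN normr1 mul1r. Qed.
Lemma pge0 i x : 0 <= p i x.
Proof.
have := ptri i x (- x); rewrite subrr p0 pN => h.
lra.
Qed.
Lemma psub i a b c : p i (a - c) <= p i (a - b) + p i (b - c).
Proof.
have -> : a - c = (a - b) + (b - c) by rewrite addrA subrK.
exact: ptri.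
Qed.
Lemma psym i a b : p i (a - b) = p i (b - a).
Proof. by rewrite -opprB pN. Qed.
Lemma pmono i j x : (i <= j)%N -> p i x <= p j x.
Proof.
move=> /subnK <-; elim: (j - i)%N => [|k ih]; first by rewrite add0n.
apply: (le_trans ih); rewrite addSn.
by case: hp => _ + _ _; apply.
Qed.

End Main.
Section EI.
Variables (R : realType) (X : lmodType R) (p : nat -> X -> R).
Hypothesis hp : frechet_seminorms p.

Lemma ei_le i (A B : set X) (x : R) :
  (forall a, A a -> forall eta : R, 0 < eta -> exists2 b, B b & p i (a - b) <= x + eta) ->
  (e_i p i A B <= x%:E)%E.
Proof.
move=> h; apply/ereal_supP => _ [a Aa <-].
apply/lee_addgt0Pr => eta eta0; apply: ge_ereal_inf.
have [b Bb hb] := h a Aa eta eta0.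
exists (p i (a - b))%:E; first by exists b.
by rewrite -EFinD lee_fin.
Qed.

Lemma ei_get i (A B : set X) (x : R) a : (e_i p i A B <= x%:E)%E -> A a ->
  forall eta : R, 0 < eta -> exists2 b, B b & p i (a - b) < x + eta.
Proof.
move=> h Aa eta eta0.
have : (ereal_inf [set (p i (a - b))%:E | b in B] < (x + eta)%:E)%E.
  apply: (le_lt_trans _ (_ : x%:E < (x + eta)%:E)%E); last by rewrite lte_fin ltrDl.
  apply: le_trans h; apply: ereal_sup_ubound; by exists a.
by move=> /ereal_inf_lt [_ [b Bb <-]]; rewrite lte_fin => ?; exists b.
Qed.

Lemma Hi_le i (A B : set X) (x : R) : (e_i p i A B <= x%:E)%E -> (e_i p i B A <= x%:E)%E ->
  (Hi p i A B <= x%:E)%E.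
Proof. by move=> h1 h2; rewrite /Hi ge_max h1 h2. Qed.
Lemma Hi_le1 i (A B : set X) (x : \bar R) : (Hi p i A B <= x)%E -> (e_i p i A B <= x)%E.
Proof. by rewrite /Hi ge_max => /andP[]. Qed.
Lemma Hi_le2 i (A B : set X) (x : \bar R) : (Hi p i A B <= x)%E -> (e_i p i B A <= x)%E.
Proof. by rewrite /Hi ge_max => /andP[]. Qed.

Lemma ei_ge0 i (A B : set X) : A !=set0 -> (0 <= e_i p i A B)%E.
Proof.
move=> [a Aa]; apply: le_ereal_sup_tmp.
exists (ereal_inf [set (p i (a - b))%:E | b in B]); first by exists a.
by apply/ereal_infP => _ [b _ <-]; rewrite lee_fin (pge0 hp).
Qed.
Lemma Hi_ge0 i (A B : set X) : A !=set0 -> (0 <= Hi p i A B)%E.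
Proof. by move=> /(ei_ge0 i B) h; rewrite /Hi le_max h. Qed.

Lemma Hi_mono i j (A B : set X) (x : R) : (i <= j)%N ->
  (Hi p j A B <= x%:E)%E -> (Hi p i A B <= x%:E)%E.
Proof.
move=> ij h.
have k (C D : set X) : (e_i p j C D <= x%:E)%E -> (e_i p i C D <= x%:E)%E.
  move=> hj; apply: ei_le => a Ca eta eta0.
  have [b Db hb] := ei_get hj Ca eta0; exists b => //.
  exact: le_trans (pmono hp _ ij) (ltW hb).
by apply: Hi_le; apply: k; [apply: Hi_le1 h | apply: Hi_le2 h].
Qed.

Lemma Hi_tri i (A B C : set X) (x y : R) : (Hi p i A B <= x%:E)%E ->
  (Hi p i B C <= y%:E)%E -> (Hi p i A C <= (x + y)%:E)%E.
Proof.
move=> h1 h2; apply: Hi_le; apply: ei_le.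
- move=> a Aa eta eta0.
  have e2 : 0 < eta / 2 by rewrite divr_gt0.
  have [b Bb hb] := ei_get (Hi_le1 h1) Aa e2.
  have [c Cc hc] := ei_get (Hi_le1 h2) Bb e2.
  exists c => //; apply: (le_trans (psub hp i a b c)); lra.
- move=> c Cc eta eta0.
  have e2 : 0 < eta / 2 by rewrite divr_gt0.
  have [b Bb hb] := ei_get (Hi_le2 h2) Cc e2.
  have [a Aa ha] := ei_get (Hi_le2 h1) Bb e2.
  exists a => //; apply: (le_trans (psub hp i c b a)); lra.
Qed.

End EI.
Section CV.
Variable R : realType.

Lemma near_ooP (P : nat -> Prop) :
  (exists N, forall n, (N <= n)%N -> P n) -> \forall n \near \oo, P n.
Proof. by move=> [N h]; exists N => // n /h. Qed.
Lemma near_ooE (P : nat -> Prop) :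
  (\forall n \near \oo, P n) -> exists N, forall n, (N <= n)%N -> P n.
Proof. by move=> [N _ h]; exists N => n /h. Qed.

Lemma cvg0_le (u : nat -> \bar R) : u @ \oo --> 0%E ->
  forall e : R, 0 < e -> exists N, forall n, (N <= n)%N -> (u n <= e%:E)%E.
Proof.
move=> /fine_cvgP [hf /cvgrPdist_le hc] e e0.
apply: near_ooE; near=> n.
have : u n \is a fin_num by near: n.
have : `|0 - fine (u n)| <= e by near: n; exact: hc.
rewrite sub0r normrN; case: (u n) => // r /= hr _.
by rewrite lee_fin (le_trans (ler_norm r)).
Unshelve. all: by end_near. Qed.

Lemma le_cvg0 (u : nat -> \bar R) : (forall n, (0 <= u n)%E) ->
  (forall e : R, 0 < e -> exists N, forall n, (N <= n)%N -> (u n <= e%:E)%E) ->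
  u @ \oo --> 0%E.
Proof.
move=> u0 h; apply/fine_cvgP; split.
  have [N hN] := h 1 ltr01; apply: near_ooP; exists N => n /hN hn.
  by rewrite ge0_fin_numE ?u0 // (le_lt_trans hn) // ltry.
apply/cvgrPdist_le => e e0; have [N hN] := h e e0; apply: near_ooP.
exists N => n /hN hn; rewrite sub0r normrN /=.
move: hn (u0 n); case: (u n) => // r /=; rewrite !lee_fin => h1 h2.
by rewrite ger0_norm.
Qed.
End CV.
Section FD.
Variables (R : realType) (X : lmodType R) (p : nat -> X -> R).
Hypothesis hp : frechet_seminorms p.

Definition term i (x y : X) : R := 2 ^- i.+1 * (p i (x - y) / (1 + p i (x - y))).

Lemma frac_ge0 (q : R) : 0 <= q -> 0 <= q / (1 + q).
Proof. by move=> q0; rewrite divr_ge0 // addr_ge0. Qed.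
Lemma frac_le1 (q : R) : 0 <= q -> q / (1 + q) <= 1.
Proof. by move=> q0; rewrite ler_pdivrMr ?mul1r ?lerDr // ltr_pwDl. Qed.
Lemma frac_le (q : R) : 0 <= q -> q / (1 + q) <= q.
Proof. by move=> q0; rewrite ler_pdivrMr ?ltr_pwDl // ler_peMr // lerDl. Qed.
Lemma frac_lt (q e : R) : 0 <= q -> 0 < e -> q / (1 + q) < e / (1 + e) -> q < e.
Proof.
move=> q0 e0; rewrite ltNge => h; rewrite ltNge; apply/negP => eq; move/negP: h; apply.
rewrite ler_pdivrMr ?ltr_pwDl ?(ltW e0) // mulrAC ler_pdivlMr ?ltr_pwDl //; nra.
Qed.

Lemma p2_gt0 i : 0 < (2 : R) ^- i.+1.
Proof. by rewrite invr_gt0 exprn_gt0. Qed.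
Lemma p2_le1 i : (2 : R) ^- i.+1 <= 1.
Proof. by rewrite invf_le1 ?exprn_gt0 // exprn_ege1 // ler1n. Qed.

Lemma term_ge0 i x y : 0 <= term i x y.
Proof. by apply: mulr_ge0; [exact: ltW (p2_gt0 i) | exact: frac_ge0 (pge0 hp _ _)]. Qed.

Lemma term_le_p2 i x y : term i x y <= 2 ^- i.+1.
Proof. by rewrite /term ler_piMr ?(ltW (p2_gt0 i)) // frac_le1 // (pge0 hp). Qed.

Lemma term_le_p i x y : term i x y <= p i (x - y).
Proof.
rewrite /term; apply: (le_trans (ler_piMl _ (p2_le1 i))); first by rewrite frac_ge0 // (pge0 hp).
by rewrite frac_le // (pge0 hp).
Qed.

Lemma fdistE x y : fdist p x y = (\sum_(i <oo) (term i x y)%:E)%E.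
Proof. by []. Qed.

Lemma fdist_ge0 x y : (0 <= fdist p x y)%E.
Proof. by rewrite fdistE; apply: nneseries_ge0 => n _ _; rewrite lee_fin term_ge0. Qed.

Lemma term_le_fdist i x y : ((term i x y)%:E <= fdist p x y)%E.
Proof.
rewrite fdistE; apply: le_trans (nneseries_lim_ge i.+1 _); last first.
  by move=> n _ _; rewrite lee_fin term_ge0.
by rewrite big_nat_recr //= leeDr // sume_ge0 // => n _; rewrite lee_fin term_ge0.
Qed.

Lemma ed_le (A B : set X) (x : R) :
  (forall a, A a -> forall eta : R, 0 < eta -> exists2 b, B b & (fdist p a b <= (x + eta)%:E)%E) ->
  (e_d p A B <= x%:E)%E.
Proof.
move=> h; apply/ereal_supP => _ [a Aa <-].
apply/lee_addgt0Pr => eta eta0; apply: ge_ereal_inf.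
have [b Bb hb] := h a Aa eta eta0.
by exists (fdist p a b); first by exists b.
Qed.

Lemma ed_get (A B : set X) (x : R) a : (e_d p A B <= x%:E)%E -> A a ->
  forall eta : R, 0 < eta -> exists2 b, B b & (fdist p a b < (x + eta)%:E)%E.
Proof.
move=> h Aa eta eta0.
have : (ereal_inf [set fdist p a b | b in B] < (x + eta)%:E)%E.
  apply: (le_lt_trans _ (_ : x%:E < (x + eta)%:E)%E); last by rewrite lte_fin ltrDl.
  apply: le_trans h; apply: ereal_sup_ubound; by exists a.
by move=> /ereal_inf_lt [_ [b Bb <-]] ?; exists b.
Qed.

Lemma ed_ge0 (A B : set X) : A !=set0 -> (0 <= e_d p A B)%E.
Proof.
move=> [a Aa]; apply: le_ereal_sup_tmp.
exists (ereal_inf [set fdist p a b | b in B]); first by exists a.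
by apply/ereal_infP => _ [b _ <-]; rewrite fdist_ge0.
Qed.
Lemma Hd_ge0 (A B : set X) : A !=set0 -> (0 <= Hd p A B)%E.
Proof. by move=> /(ed_ge0 B) h; rewrite /Hd le_max h. Qed.

End FD.
Section PW.
Variables (R : realType) (X : lmodType R) (p : nat -> X -> R).
Hypothesis hp : frechet_seminorms p.

Lemma Hd_Hi i (eps : R) : 0 < eps -> exists2 delta : R, 0 < delta &
  forall A B : set X, (Hd p A B <= delta%:E)%E -> (Hi p i A B <= eps%:E)%E.
Proof.
move=> e0; set c := 2 ^- i.+1 * (eps / (1 + eps)).
have c0 : 0 < c by apply: mulr_gt0; [exact: p2_gt0 | rewrite divr_gt0 // addr_gt0].
exists (c / 2); first by rewrite divr_gt0.
have k (A B : set X) : (e_d p A B <= (c / 2)%:E)%E -> (e_i p i A B <= eps%:E)%E.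
  move=> h; apply: ei_le => a Aa eta eta0.
  have c2 : 0 < c / 2 by rewrite divr_gt0.
  have [b Bb hb] := ed_get h Aa c2.
  exists b => //.
  have : term p i a b < c.
    by rewrite -lte_fin (le_lt_trans (term_le_fdist hp _ _ _)) // (splitr c).
  rewrite /term /c ltr_pM2l ?p2_gt0 // => /frac_lt -/(_ (pge0 hp _ _) e0) h2.
  by apply: ltW; apply: (lt_le_trans h2); rewrite lerDl ltW.
by move=> A B h; apply: Hi_le; apply: k; move: h; rewrite /Hd ge_max => /andP[].
Qed.

Lemma tail_small (e : R) : 0 < e -> exists M, (\sum_(M <= k <oo) ((2:R) ^- k.+1)%:E <= e%:E)%E.
Proof.
move=> e0.
have fin : (\sum_(0 <= k <oo) ((2:R) ^- k.+1)%:E < +oo)%E.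
  apply: (le_lt_trans _ (ltry 1)).
  have := @epsilon_trick0 R 1 xpredT ler01.
  rewrite (@eq_eseriesr _ _ (fun k => ((2:R) ^- k.+1)%:E)) //.
  by move=> k _; rewrite natrX div1r.
have := nneseries_tail_cvg fin (fun k _ => ltW (@p2_gt0 R k)).
move=> /cvg0_le /(_ e e0) [M hM]; exists M; exact: hM.
Qed.

End PW.
Section PW2.
Variables (R : realType) (X : lmodType R) (p : nat -> X -> R).
Hypothesis hp : frechet_seminorms p.

Lemma Hi_Hd (eps : R) : 0 < eps -> exists N, exists2 delta : R, 0 < delta &
  forall A B : set X, (Hi p N A B <= delta%:E)%E -> (Hd p A B <= eps%:E)%E.
Proof.
move=> e0; have e20 : 0 < eps / 2 by rewrite divr_gt0.
have [M hM] := tail_small e20.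
set m : R := M%:R.
have m0 : 0 <= m by rewrite /m ler0n.
have m1 : 0 < m + 1 by rewrite ltr_wpDl.
exists M, (eps / 2 / (m + 1)); first by rewrite divr_gt0.
have k (C D : set X) : (e_i p M C D <= (eps / 2 / (m + 1))%:E)%E -> (e_d p C D <= eps%:E)%E.
  move=> hCD; apply: ed_le => a Ca eta eta0.
  have eta'0 : 0 < eta / (m + 1) by rewrite divr_gt0.
  have [b Db hb] := ei_get hCD Ca eta'0.
  exists b => //.
  set d' := eps / 2 / (m + 1) + eta / (m + 1).
  rewrite fdistE (nneseries_split 0 M); last by move=> *; rewrite lee_fin term_ge0.
  rewrite add0n.
  apply: (@le_trans _ _ ((d' *+ M)%:E + (eps / 2)%:E)%E); last first.
    rewrite -EFinD lee_fin -mulr_natr -/m.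
    have r1 : m / (m + 1) <= 1 by rewrite ler_pdivrMr // mul1r lerDl.
    have r0 : 0 <= m / (m + 1) by rewrite divr_ge0 // ltW.
    have -> : d' * m = (eps / 2 + eta) * (m / (m + 1)).
      by rewrite /d'; field; rewrite gt_eqF.
    nra.
  apply: leeD.
    rewrite sumEFin lee_fin (_ : d' *+ M = \sum_(0 <= i < M) d'); last by rewrite sumr_const_nat subn0.
    apply: ler_sum_nat => i /andP[_ iM].
    apply: (le_trans (term_le_p hp _ _ _)).
    apply: (le_trans (pmono hp _ (ltnW iM))).
    exact: ltW.
  apply: le_trans hM; apply: lee_nneseries => [n _ _|n _].
    by rewrite lee_fin term_ge0.
  by rewrite lee_fin term_le_p2.
move=> A B h; rewrite /Hd ge_max; apply/andP; split; apply: k.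
  exact: Hi_le1 h.
exact: Hi_le2 h.
Qed.

End PW2.
Section Meas.
Variable R : realType.
Definition LT := caratheodory_type (R:=R) (wlength (R:=R) idfun)^*%mu.
Definition lmu : {measure set LT -> \bar R} := @Lmu R.

Lemma LmuE (A : set R) : Lmu A = lmu A. Proof. by []. Qed.
Lemma LmeasE (A : set R) : Lmeasurable A = @measurable _ LT A. Proof. by []. Qed.

Lemma Lmeas_bigcup (F : nat -> set R) : (forall i, Lmeasurable (F i)) -> Lmeasurable (\bigcup_i F i).
Proof. by move=> h; rewrite LmeasE; apply: bigcupT_measurable => i; rewrite -LmeasE. Qed.
Lemma Lmeas_I (A B : set R) : Lmeasurable A -> Lmeasurable B -> Lmeasurable (A `&` B).
Proof. by rewrite !LmeasE; exact: measurableI. Qed.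
Lemma Lmeas_U (A B : set R) : Lmeasurable A -> Lmeasurable B -> Lmeasurable (A `|` B).
Proof. by rewrite !LmeasE; exact: measurableU. Qed.
Lemma Lmeas_const (P : Prop) : Lmeasurable [set _ : R | P].
Proof.
rewrite LmeasE; case: (pselect P) => h.
  by rewrite (_ : [set _ | P] = setT) //; apply/seteqP; split.
by rewrite (_ : [set _ | P] = set0) //; apply/seteqP; split.
Qed.
Lemma Lmeas_itv (i : interval R) : Lmeasurable [set` i].
Proof. apply: (@sub_caratheodory _ _ R (wlength idfun)). exact: (measurable_itv i). Qed.
Lemma Lmu01 : @Lmu R [set` `[0%R, 1%R]] = 1%E.
Proof.
have := @lebesgue_measure_itv R `[0%R, 1%R]. move=> h.
transitivity (@lebesgue_measure R [set` `[0%R, 1%R]]); first by [].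
by rewrite h /= lte_fin ltr01 oppr0 adde0.
Qed.
Lemma Lmu_mono (A B : set R) : Lmeasurable A -> Lmeasurable B -> A `<=` B -> (Lmu A <= Lmu B)%E.
Proof. by rewrite !LmuE !LmeasE => mA mB AB; apply: le_measure => //; rewrite inE. Qed.
Lemma Lmu_ge0 (A : set R) : (0 <= Lmu A)%E.
Proof. by rewrite LmuE measure_ge0. Qed.

Lemma null_bigcup (N : nat -> set R) : (forall i, Lmeasurable (N i) /\ Lmu (N i) = 0%E) ->
  Lmeasurable (\bigcup_i N i) /\ Lmu (\bigcup_i N i) = 0%E.
Proof.
move=> h; have mN : Lmeasurable (\bigcup_i N i) by apply: Lmeas_bigcup => i; case: (h i).
split => //; apply/eqP; rewrite eq_le Lmu_ge0 andbT LmuE.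
apply: le_trans (@measure_sigma_subadditive _ _ _ lmu _ N _ _ _) _.
- by move=> i; rewrite -LmeasE; case: (h i).
- by rewrite -LmeasE.
- by [].
by rewrite eseries0 // => i _ _; rewrite -LmuE; case: (h i).
Qed.

Lemma ae01_mono (P Q : R -> Prop) : ae01 P ->
  (forall t, [set` `[0%R, 1%R]] t -> P t -> Q t) -> ae01 Q.
Proof. by move=> [N [mN N0 h]] PQ; exists N; split => // t t01 /(h _ t01) /(PQ _ t01). Qed.

Lemma ae01_all (P : nat -> R -> Prop) : (forall i, ae01 (P i)) -> ae01 (fun t => forall i, P i t).
Proof.
move=> h; have [N hN] := choice h.
have [mN N0] := @null_bigcup N (fun i => let: And3 a b _ := hN i in conj a b).
exists (\bigcup_i N i); split => // t t01 nN i.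
have [_ _ +] := hN i; apply => // Nit; apply: nN; by exists i.
Qed.
End Meas.
Section Simple.
Variables (R : realType) (X : lmodType R) (p : nat -> X -> R).

Lemma simple_ne (S : R -> set X) t : simple_multi p S -> [set` `[0%R, 1%R]] t -> S t !=set0.
Proof. by move=> [k [A [C [_ cbC _ cov]]]] t01; have [j _ ->] := cov t t01; case: (cbC j). Qed.

Lemma meas2 (S1 S2 : R -> set X) (Q : set X -> set X -> Prop) :
  simple_multi p S1 -> simple_multi p S2 ->
  Lmeasurable ([set` `[0%R, 1%R]] `&` [set t | Q (S1 t) (S2 t)]).
Proof.
move=> [k1 [A1 [C1 [mA1 _ dA1 cov1]]]] [k2 [A2 [C2 [mA2 _ dA2 cov2]]]].
rewrite (_ : _ `&` _ = [set` `[0%R, 1%R]] `&` \bigcup_(a in [set: 'I_k1])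
   \bigcup_(b in [set: 'I_k2]) (A1 a `&` A2 b `&` [set _ | Q (C1 a) (C2 b)])).
  apply: Lmeas_I; first exact: Lmeas_itv.
  rewrite LmeasE; apply: fin_bigcup_measurable; first exact: finite_finset.
  move=> a _; apply: fin_bigcup_measurable; first exact: finite_finset.
  by move=> b _; rewrite -LmeasE; apply: Lmeas_I; [exact: Lmeas_I | exact: Lmeas_const].
apply/seteqP; split => t [t01 ht].
  have [a Aa e1] := cov1 t t01; have [b Bb e2] := cov2 t t01.
  split => //; exists a => //; exists b => //; split; first by split.
  by rewrite /= -e1 -e2.
case: ht => a _ [b _ [[Aa Bb] hQ]].
split => //=.
have [a' Aa' e1] := cov1 t t01; have [b' Bb' e2] := cov2 t t01.
have aa : a' = a.
  case: (eqVneq a' a) => // /dA1 h.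
  have : (A1 a' `&` A1 a) t by split.
  by rewrite h.
have bb : b' = b.
  case: (eqVneq b' b) => // /dA2 h.
  have : (A2 b' `&` A2 b) t by split.
  by rewrite h.
by rewrite e1 e2 aa bb.
Qed.

End Simple.
Section Eq1.
Variables (R : realType) (X : lmodType R) (p : nat -> X -> R).
Hypothesis hp : frechet_seminorms p.

Lemma HdHi_cvg (A : nat -> set X) (B : set X) : (forall n, A n !=set0) ->
  (fun n => Hd p (A n) B) @ \oo --> 0%E ->
  forall i, (fun n => Hi p i (A n) B) @ \oo --> 0%E.
Proof.
move=> ne h i; apply: le_cvg0 => [n|e e0]; first exact: Hi_ge0 hp _ _ _ (ne n).
have [d d0 hd] := Hd_Hi hp i e0.
have [N hN] := cvg0_le h d0; exists N => n /hN; exact: hd.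
Qed.

Lemma HiHd_cvg (A : nat -> set X) (B : set X) : (forall n, A n !=set0) ->
  (forall i, (fun n => Hi p i (A n) B) @ \oo --> 0%E) ->
  (fun n => Hd p (A n) B) @ \oo --> 0%E.
Proof.
move=> ne h; apply: le_cvg0 => [n|e e0]; first exact: (Hd_ge0 hp B (ne n)).
have [N [d d0 hd]] := Hi_Hd hp e0.
have [M hM] := cvg0_le (h N) d0; exists M => n /hM; exact: hd.
Qed.

Lemma i_ii (G : R -> set X) : bochner_measurable p G -> totally_measurable p G.
Proof.
move=> [Gn [sG ae]]; exists Gn; split => // i.
refine (ae01_mono ae _) => t t01 h; apply: HdHi_cvg h i => n.
exact: simple_ne (sG n) t01.
Qed.

Lemma ii_i (G : R -> set X) : totally_measurable p G -> bochner_measurable p G.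
Proof.
move=> [Gn [sG ae]]; exists Gn; split => //.
refine (ae01_mono (ae01_all ae) _) => t t01 h; apply: HiHd_cvg h => n.
exact: simple_ne (sG n) t01.
Qed.

Lemma ii_iii (G : R -> set X) : totally_measurable p G -> measurable_by_seminorm p G.
Proof. by move=> [Gn [sG ae]] i; exists Gn; split. Qed.

End Eq1.
Section Main2.
Variables (R : realType) (X : lmodType R) (p : nat -> X -> R).
Hypothesis hp : frechet_seminorms p.

Lemma geo_fin : (\sum_(0 <= k <oo) ((2:R) ^- k.+1)%:E < +oo)%E.
Proof.
apply: (le_lt_trans _ (ltry 1)).
have := @epsilon_trick0 R 1 xpredT ler01.
rewrite (@eq_eseriesr _ _ (fun k => ((2:R) ^- k.+1)%:E)) //.
by move=> k _; rewrite natrX div1r.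
Qed.

Lemma Hi_sym i (A B : set X) : Hi p i A B = Hi p i B A.
Proof. by rewrite /Hi maxC. Qed.

Lemma iii_ii (G : R -> set X) : measurable_by_seminorm p G -> totally_measurable p G.
Proof.
move=> H.
have [S hS] := choice H.
have sS j n : simple_multi p (S j n) by case: (hS j) => + _; apply.
have aeS j : ae01 (fun t => (fun n => Hi p j (S j n t) (G t)) @ \oo --> 0%E) by case: (hS j).
have [N hN] := choice aeS.
pose c (j : nat) : R := (j.+1%:R)^-1.
have c0 j : 0 < c j by rewrite invr_gt0 ltr0n.
pose Q j m m1 m2 (A B : set X) : Prop :=
  [/\ (m <= m1)%N, (m <= m2)%N & ~ (Hi p j A B <= (c j)%:E)%E].
pose D j m := \bigcup_m1 \bigcup_m2
  ([set` `[0%R, 1%R]] `&` [set t | Q j m m1 m2 (S j m1 t) (S j m2 t)]).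
have mD j m : Lmeasurable (D j m).
  by apply: Lmeas_bigcup => m1; apply: Lmeas_bigcup => m2; exact: meas2.
have D01 j m : D j m `<=` [set` `[0%R, 1%R]] by move=> t [m1 _ [m2 _ []]].
have Dinc j : {homo D j : n m / (n <= m)%N >-> (m <= n)%O}.
  move=> m m' mm'; apply/subsetPset => t [m1 _ [m2 _ [t01 [h1 h2 h3]]]].
  exists m1 => //; exists m2 => //; split => //; split => //; exact: leq_trans mm' _.
have mNj j : Lmeasurable (N j) by case: (hN j).
have N0 j : Lmu (N j) = 0%E by case: (hN j).
have capN j : \bigcap_m D j m `<=` N j.
  move=> t hD; have t01 := D01 j 0%N t (hD 0%N I).
  apply: contrapT => nN.
  have [_ _ +] := hN j; move=> /(_ t t01 nN) hc.
  have c20 : 0 < c j / 2 by rewrite divr_gt0.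
  have [M hM] := cvg0_le hc c20.
  have [m1 _ [m2 _ [_ [Mm1 Mm2 hQ]]]] := hD M I.
  apply: hQ; rewrite (splitr (c j)); apply: (Hi_tri hp (hM _ Mm1)).
  rewrite Hi_sym; exact: hM.
have mcap j : Lmeasurable (\bigcap_m D j m).
  by rewrite LmeasE; apply: bigcapT_measurable => m; rewrite -LmeasE.
have cvgD j : (fun m => Lmu (D j m)) @ \oo --> 0%E.
  have muD0 : ((lmu R) (D j 0%N) < +oo)%E.
    rewrite -LmuE; apply: (@le_lt_trans _ _ 1%E); last exact: ltry.
    rewrite -Lmu01; apply: Lmu_mono; [exact: mD | exact: Lmeas_itv | exact: D01].
  have := @nonincreasing_cvg_mu _ _ _ (lmu R) (D j) muD0 (mD j) (mcap j) (Dinc j).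
  suff -> : (lmu R) (\bigcap_m D j m) = 0%E by [].
  apply/eqP; rewrite eq_le measure_ge0 andbT -LmuE -(N0 j).
  exact: Lmu_mono (capN j).
have : forall j, exists M, (Lmu (D j M) <= (2 ^- j.+1)%:E)%E.
  move=> j; have [M hM] := cvg0_le (cvgD j) (p2_gt0 R j).
  by exists M; apply: hM.
move=> /choice [m hm].
pose F j := D j (m j).
have LF : Lmu (lim_sup_set F) = 0%E.
  rewrite LmuE; apply: lim_sup_set_cvg0 => [k|]; first by rewrite -LmeasE; exact: mD.
  apply: le_lt_trans geo_fin; apply: lee_nneseries => [n _ _|n _].
    exact: measure_ge0.
  exact: hm.
have mL : Lmeasurable (lim_sup_set F).
  rewrite LmeasE; apply: bigcap_measurable => [|n _]; first by exists 0%N.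
  by apply: bigcup_measurable => k _; rewrite -LmeasE; exact: mD.
have [mUN UN0] := null_bigcup (fun j => conj (mNj j) (N0 j)).
exists (fun j => S j (m j)); split; first by move=> j; exact: sS.
move=> i; exists ((\bigcup_j N j) `|` lim_sup_set F); split.
- exact: Lmeas_U.
- apply/eqP; rewrite eq_le Lmu_ge0 andbT.
  rewrite LmuE; apply: le_trans (measureU2 _ _ _) _.
  + by rewrite -LmeasE.
  + by rewrite -LmeasE.
  change (Lmu (\bigcup_j N j) + Lmu (lim_sup_set F) <= 0)%E.
  by rewrite UN0 LF adde0.
move=> t t01 nN.
have nNj j : ~ N j t by move=> Njt; apply: nN; left; exists j.
have [J hJ] : exists J, forall j, (J <= j)%N -> ~ F j t.
  apply: contrapT => hn; apply: nN; right => J _.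
  apply: contrapT => hJ; apply: hn; exists J => j Jj Fj; apply: hJ; by exists j.
have bound j : (J <= j)%N -> (Hi p j (S j (m j) t) (G t) <= (c j + c j)%:E)%E.
  move=> Jj; have hnot := hJ j Jj.
  have key m2 : (m j <= m2)%N -> (Hi p j (S j (m j) t) (S j m2 t) <= (c j)%:E)%E.
    move=> mm2; apply: contrapT => hc; apply: hnot.
    by exists (m j) => //; exists m2 => //; split => //; split.
  have [_ _ +] := hN j; move=> /(_ t t01 (nNj j)) hcv.
  have [M hM] := cvg0_le hcv (c0 j).
  apply: (Hi_tri hp (key (maxn M (m j)) _) (hM _ _)).
    by rewrite leq_maxr.
  by rewrite leq_maxl.
apply: le_cvg0 => [n|e e0].
  exact: Hi_ge0 hp _ _ _ (simple_ne (sS n (m n)) t01).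
pose K := Num.Def.archi_bound (2 / e).
have hK : 2 / e < K%:R by apply: archi_boundP; rewrite divr_ge0 // ltW.
exists (maxn J (maxn i K)) => n hn.
have Jn : (J <= n)%N by apply: leq_trans hn; rewrite leq_maxl.
have iN : (i <= n)%N by apply: leq_trans hn; rewrite (leq_trans _ (leq_maxr _ _)) // leq_maxl.
have KN : (K <= n)%N by apply: leq_trans hn; rewrite (leq_trans _ (leq_maxr _ _)) // leq_maxr.
apply: (Hi_mono hp iN); apply: le_trans (bound n Jn) _; rewrite lee_fin.
have -> : c n + c n = 2 / n.+1%:R.
  rewrite /c; field; apply/eqP => h0; have : (0:R) <= n%:R := ler0n _ n; lra.
rewrite ler_pdivrMr ?ltr0n //.
move: hK; rewrite ltr_pdivrMr // => hK; apply: ltW; apply: (lt_le_trans hK).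
rewrite [X in _ <= X]mulrC; apply: ler_wpM2r; first exact: ltW.
rewrite ler_nat; exact: leq_trans KN (leqnSn n).
Qed.

End Main2.

Unset Implicit Arguments.

Theorem theorem3p5 (R : realType) (X : lmodType R) (p : nat -> X -> R)
  (hp : frechet_seminorms p) (G : R -> set X)
  (hG : forall t, [set` `[0%R, 1%R]] t -> cb p (G t)) :
  (bochner_measurable p G <-> totally_measurable p G) /\
  (totally_measurable p G <-> measurable_by_seminorm p G).
Proof.
split; split.
- exact: i_ii.
- exact: ii_i.
- exact: ii_iii.
- exact: iii_ii.
Qed.
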